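(* Let $\mathcal C$ be a category with a class of fibrations and a class of cofibrations, let $X$ be a cofibrant object admitting at least one (weak) cylinder object and let $Y$ be a fibrant object admitting at least one (weak) path object. Then the homotopy relation on maps $X\to Y$ is an equivalence relation; more precisely, for any fixed weak cylinder object of $X$ or weak path object of $Y$, the relation ''homotopic relative to it'' is an equivalence relation (and these relations all coincide).
   Context: A class of cofibrations on $\mathcal C$: a class of maps such that $\mathcal C$ has a cofibrant initial object $0$ ($X$ cofibrant means $0\to X$ is a cofibration), isomorphisms with cofibrant domain are cofibrations, cofibrations compose, and pushouts of a cofibration $A\to B$ along $A\to C$ with $A,C$ cofibrant exist with $C\to C\sqcup_AB$ a cofibration. A class of fibrations is a class of cofibrations in $\mathcal C^{op}$. An acyclic cofibration is a cofibration with the left lifting property against all fibrations between fibrant objects; an acyclic fibration is a fibration with the right lifting property against all cofibrations between cofibrant objects. A weak cylinder object for a cofibrant $X$ is a commutative square with a cofibration $X\sqcup X\hookrightarrow IX$, the codiagonal $X\sqcup X\to X$, a map $IX\to DX$ and an acyclic cofibration $X\to DX$, such that the first inclusion $X\to IX$ is an acyclic cofibration (strong if $DX=X$). A weak path object for a fibrant $Y$ is dually a square with a fibration $PY\to Y\times Y$, the diagonal, a map $TY\to PY$ and an acyclic fibration $TY\to Y$, such that the first projection $PY\to Y$ is an acyclic fibration. Maps $f,g\colon X\to Y$ are homotopic relative to a cylinder object $IX$ if $(f,g)\colon X\sqcup X\to Y$ factors through $X\sqcup X\to IX$, and relative to a path object $PY$ if $(f,g)\colon X\to Y\times Y$ factors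 through $PY\to Y\times Y$. *)

(* Defs.v *)
Set Implicit Arguments.
Unset Strict Implicit.

Record Category := {
  Ob :> Type;
  Hom : Ob -> Ob -> Type;
  idm : forall A, Hom A A;
  comp : forall A B C, Hom B C -> Hom A B -> Hom A C;
  comp_assoc : forall A B C D (f : Hom A B) (g : Hom B C) (h : Hom C D),
      comp h (comp g f) = comp (comp h g) f;
  comp_id_l : forall A B (f : Hom A B), comp (idm B) f = f;
  comp_id_r : forall A B (f : Hom A B), comp f (idm A) = f
}.

Arguments Hom {c} _ _.
Arguments idm {c} _.
Arguments comp {c A B C} _ _.

Notation "g \oc f" := (comp g f) (at level 40, left associativity).

Definition op (C : Category) : Category.
Proof.
  refine {| Ob := Ob C;
            Hom := fun A B => @Hom C B A;
            idm := fun A => @idm C A;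
            comp := fun A B D (g : @Hom C D B) (f : @Hom C B A) => comp f g |}.
  - intros; symmetry; apply comp_assoc.
  - intros; apply comp_id_r.
  - intros; apply comp_id_l.
Defined.

Section Basic.
Variable C : Category.

Definition is_iso {A B : C} (f : Hom A B) : Prop :=
  exists g : Hom B A, g \oc f = idm A /\ f \oc g = idm B.

Definition is_initial (I : C) : Prop :=
  forall X : C, exists f : Hom I X, forall g : Hom I X, g = f.

Definition is_pushout {A B C' P : C} (f : Hom A B) (g : Hom A C')
    (i : Hom C' P) (j : Hom B P) : Prop :=
  i \oc g = j \oc f /\
  forall (Q : C) (u : Hom C' Q) (v : Hom B Q), u \oc g = v \oc f ->
    exists h : Hom P Q, h \oc i = u /\ h \oc j = v /\
      forall h' : Hom P Q, h' \oc i = u -> h' \oc j = v -> h' = h.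

Definition is_coproduct {X1 X2 S : C} (in1 : Hom X1 S) (in2 : Hom X2 S) : Prop :=
  forall (Q : C) (u : Hom X1 Q) (v : Hom X2 Q),
    exists h : Hom S Q, h \oc in1 = u /\ h \oc in2 = v /\
      forall h' : Hom S Q, h' \oc in1 = u -> h' \oc in2 = v -> h' = h.

Definition is_product {Y1 Y2 P : C} (pr1 : Hom P Y1) (pr2 : Hom P Y2) : Prop :=
  forall (Q : C) (u : Hom Q Y1) (v : Hom Q Y2),
    exists h : Hom Q P, pr1 \oc h = u /\ pr2 \oc h = v /\
      forall h' : Hom Q P, pr1 \oc h' = u -> pr2 \oc h' = v -> h' = h.

Definition lifts {A B E D : C} (i : Hom A B) (p : Hom E D) : Prop :=
  forall (a : Hom A E) (b : Hom B D), p \oc a = b \oc i ->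
    exists h : Hom B E, h \oc i = a /\ p \oc h = b.
End Basic.

Record CofibClass (C : Category) := {
  cof : forall A B : C, Hom A B -> Prop;
  init : C;
  init_initial : is_initial init;
  init_cofibrant : forall h : Hom init init, cof h;
  iso_cof : forall (A B : C) (f : Hom A B), is_iso f ->
      (forall h : Hom init A, cof h) -> cof f;
  comp_cof : forall (A B D : C) (f : Hom A B) (g : Hom B D),
      cof f -> cof g -> cof (g \oc f);
  pushout_cof : forall (A B C' : C) (f : Hom A B) (g : Hom A C'),
      cof f -> (forall h : Hom init A, cof h) -> (forall h : Hom init C', cof h) ->
      exists (P : C) (i : Hom C' P) (j : Hom B P), is_pushout f g i j /\ cof i
}.

Arguments cof {C} c {A B} _.
Arguments init {C} c.

Definition FibClass (C : Category) := CofibClass (op C).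

Section ModelNotions.
Variables (C : Category) (Cof : CofibClass C) (Fib : FibClass C).

Definition is_cof {A B : C} (f : Hom A B) : Prop := cof Cof f.
Definition is_fib {A B : C} (f : Hom A B) : Prop := @cof (op C) Fib B A f.

(** terminal object of [C] = the initial object of [C^op] *)
Definition term : C := init Fib.

Definition cofibrant (X : C) : Prop := forall h : Hom (init Cof) X, is_cof h.
Definition fibrant (Y : C) : Prop := forall h : Hom Y term, is_fib h.

Definition acyclic_cof {A B : C} (i : Hom A B) : Prop :=
  is_cof i /\ forall (E D : C) (p : Hom E D),
    fibrant E -> fibrant D -> is_fib p -> lifts i p.

Definition acyclic_fib {E D : C} (p : Hom E D) : Prop :=
  is_fib p /\ forall (A B : C) (i : Hom A B),
    cofibrant A -> cofibrant B -> is_cof i -> lifts i p.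

Record weak_cylinder (X : C) := {
  cyl_sum : C;
  cyl_in1 : Hom X cyl_sum;
  cyl_in2 : Hom X cyl_sum;
  cyl_sum_coprod : is_coproduct cyl_in1 cyl_in2;
  cyl_I : C;
  cyl_incl : Hom cyl_sum cyl_I;
  cyl_incl_cof : is_cof cyl_incl;
  cyl_codiag : Hom cyl_sum X;
  cyl_codiag_1 : cyl_codiag \oc cyl_in1 = idm X;
  cyl_codiag_2 : cyl_codiag \oc cyl_in2 = idm X;
  cyl_D : C;
  cyl_p : Hom cyl_I cyl_D;
  cyl_j : Hom X cyl_D;
  cyl_j_acyclic : acyclic_cof cyl_j;
  cyl_square : cyl_p \oc cyl_incl = cyl_j \oc cyl_codiag;
  cyl_first_acyclic : acyclic_cof (cyl_incl \oc cyl_in1)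
}.

Record weak_path (Y : C) := {
  path_prod : C;
  path_pr1 : Hom path_prod Y;
  path_pr2 : Hom path_prod Y;
  path_prod_prod : is_product path_pr1 path_pr2;
  path_P : C;
  path_q : Hom path_P path_prod;
  path_q_fib : is_fib path_q;
  path_diag : Hom Y path_prod;
  path_diag_1 : path_pr1 \oc path_diag = idm Y;
  path_diag_2 : path_pr2 \oc path_diag = idm Y;
  path_T : C;
  path_t : Hom path_T path_P;
  path_r : Hom path_T Y;
  path_r_acyclic : acyclic_fib path_r;
  path_square : path_q \oc path_t = path_diag \oc path_r;
  path_first_acyclic : acyclic_fib (path_pr1 \oc path_q)
}.

(** [(f,g) : X ⊔ X -> Y] factors through [X ⊔ X -> IX]. *)
Definition homotopic_cyl {X Y : C} (Cy : weak_cylinder X) (f g : Hom X Y) : Prop :=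
  exists H : Hom (cyl_I Cy) Y,
    H \oc cyl_incl Cy \oc cyl_in1 Cy = f /\ H \oc cyl_incl Cy \oc cyl_in2 Cy = g.

(** [(f,g) : X -> Y × Y] factors through [PY -> Y × Y]. *)
Definition homotopic_path {X Y : C} (Pa : weak_path Y) (f g : Hom X Y) : Prop :=
  exists H : Hom X (path_P Pa),
    path_pr1 Pa \oc path_q Pa \oc H = f /\ path_pr2 Pa \oc path_q Pa \oc H = g.

End ModelNotions.

Definition is_equivalence {T : Type} (R : T -> T -> Prop) : Prop :=
  (forall x, R x x) /\ (forall x y, R x y -> R y x) /\
  (forall x y z, R x y -> R y z -> R x z).

(* Main.v *)
Require Import Defs.

Lemma init_unique (D : Category) (I Z : D) (hI : is_initial I) (f g : Hom I Z) : f = g.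
Proof. destruct (hI Z) as [h Hh]. rewrite (Hh f), (Hh g). reflexivity. Qed.

Lemma coprod_cofibrant (D : Category) (K : CofibClass D) (A B S : D)
  (in1 : Hom A S) (in2 : Hom B S) :
  is_coproduct in1 in2 -> (forall h : Hom (init K) A, cof K h) ->
  (forall h : Hom (init K) B, cof K h) -> forall h : Hom (init K) S, cof K h.
Proof.
  intros Hc hA hB h.
  destruct (init_initial K A) as [eA _]. destruct (init_initial K B) as [eB _].
  destruct (pushout_cof (f:=eB) eA (hB eB) (@init_cofibrant _ K) hA)
    as (P & i & jj & [Hsq Hpo] & Hi).
  assert (HP : forall h : Hom (init K) P, cof K h).
  { intros h'. rewrite (@init_unique _ _ _ (init_initial K) h' (i \oc eA)).
    apply comp_cof; auto. }
  destruct (Hc P i jj) as (h1 & H11 & H12 & _).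
  destruct (Hpo S in1 in2 (@init_unique _ _ _ (init_initial K) _ _)) as (h2 & H21 & H22 & _).
  assert (Hiso : is_iso h2).
  { exists h1. split.
    - destruct (Hpo P i jj Hsq) as (u & _ & _ & Hu).
      rewrite (Hu (h1 \oc h2)), (Hu (idm P)); auto.
      + apply comp_id_l.
      + apply comp_id_l.
      + rewrite <- comp_assoc, H21; auto.
      + rewrite <- comp_assoc, H22; auto.
    - destruct (Hc S in1 in2) as (u & _ & _ & Hu).
      rewrite (Hu (h2 \oc h1)), (Hu (idm S)); auto.
      + apply comp_id_l.
      + apply comp_id_l.
      + rewrite <- comp_assoc, H11; auto.
      + rewrite <- comp_assoc, H12; auto. }
  rewrite (@init_unique _ _ _ (init_initial K) h (h2 \oc (i \oc eA))).
  apply comp_cof; [apply comp_cof; auto | apply iso_cof; auto].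
Qed.

Section Main.
Variables (C : Category) (Cof : CofibClass C) (Fib : FibClass C) (X Y : C).
Hypotheses (hX : cofibrant Cof X) (hY : fibrant Fib Y).
Variables (Cy : weak_cylinder Cof Fib X) (Pa : weak_path Cof Fib Y).

Lemma term_unique (Z : C) (f g : Hom Z (term Fib)) : f = g.
Proof. exact (@init_unique (op C) _ _ (init_initial Fib) f g). Qed.

Lemma init_unique' (Z : C) (f g : Hom (init Cof) Z) : f = g.
Proof. exact (@init_unique C _ _ (init_initial Cof) f g). Qed.

Lemma term_fibrant : fibrant Fib (term Fib).
Proof. intro h. exact (@init_cofibrant _ Fib h). Qed.

Lemma cyl_refl (f : Hom X Y) : exists f0 : Hom (cyl_D Cy) Y,
  f0 \oc cyl_p Cy \oc cyl_incl Cy \oc cyl_in1 Cy = f /\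
  f0 \oc cyl_p Cy \oc cyl_incl Cy \oc cyl_in2 Cy = f.
Proof.
  destruct (cyl_j_acyclic Cy) as [_ Hl].
  destruct (init_initial Fib (cyl_D Cy)) as [b _].
  destruct (init_initial Fib Y) as [tY _].
  destruct (Hl Y (term Fib) tY hY term_fibrant (hY tY) f b (term_unique _ _ _))
    as [f0 [Hf0 _]].
  exists f0.
  rewrite <- (comp_assoc (cyl_incl Cy) (cyl_p Cy) f0), cyl_square, comp_assoc, Hf0.
  rewrite <- !comp_assoc, cyl_codiag_1, cyl_codiag_2, !comp_id_r. auto.
Qed.

Lemma path_refl (f : Hom X Y) : exists s : Hom X (path_P Pa),
  path_pr1 Pa \oc path_q Pa \oc s = f /\ path_pr2 Pa \oc path_q Pa \oc s = f.
Proof.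
  destruct (path_r_acyclic Pa) as [_ Hl].
  destruct (init_initial Cof (path_T Pa)) as [a _].
  destruct (init_initial Cof X) as [eX _].
  destruct (Hl (init Cof) X eX (@init_cofibrant _ Cof) hX (hX eX) a f (init_unique' _ _ _))
    as [k [_ Hk]].
  exists (path_t Pa \oc k).
  rewrite <- !comp_assoc, (comp_assoc k (path_t Pa) (path_q Pa)), path_square.
  rewrite <- !comp_assoc, Hk, !comp_assoc, path_diag_1, path_diag_2, !comp_id_l. auto.
Qed.

Lemma PY_fibrant : fibrant Fib (path_P Pa).
Proof.
  intro h. destruct (init_initial Fib Y) as [tY _].
  change (Hom Y (term Fib)) in tY.
  rewrite (term_unique _ h (tY \oc (path_pr1 Pa \oc path_q Pa))).
  exact (comp_cof (c:=Fib) (hY tY) (proj1 (path_first_acyclic Pa))).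
Qed.

Lemma prod_fibrant : fibrant Fib (path_prod Pa).
Proof.
  intro h. exact (@coprod_cofibrant (op C) Fib Y Y (path_prod Pa)
    (path_pr1 Pa) (path_pr2 Pa) (path_prod_prod Pa) hY hY h).
Qed.

Lemma IX_cofibrant : cofibrant Cof (cyl_I Cy).
Proof.
  intro h. destruct (init_initial Cof X) as [eX _].
  rewrite (init_unique' _ h ((cyl_incl Cy \oc cyl_in1 Cy) \oc eX)).
  exact (comp_cof (hX eX) (proj1 (cyl_first_acyclic Cy))).
Qed.

Lemma sum_cofibrant : cofibrant Cof (cyl_sum Cy).
Proof.
  intro h. exact (@coprod_cofibrant C Cof X X (cyl_sum Cy)
    (cyl_in1 Cy) (cyl_in2 Cy) (cyl_sum_coprod Cy) hX hX h).
Qed.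


Lemma lemA (a b : Hom (cyl_I Cy) Y) (K' : Hom X (path_P Pa)) :
  path_pr1 Pa \oc path_q Pa \oc K' = a \oc cyl_incl Cy \oc cyl_in1 Cy ->
  path_pr2 Pa \oc path_q Pa \oc K' = b \oc cyl_incl Cy \oc cyl_in1 Cy ->
  exists K : Hom X (path_P Pa),
  path_pr1 Pa \oc path_q Pa \oc K = a \oc cyl_incl Cy \oc cyl_in2 Cy /\
  path_pr2 Pa \oc path_q Pa \oc K = b \oc cyl_incl Cy \oc cyl_in2 Cy.
Proof.
  intros E1 E2.
  destruct (path_prod_prod Pa a b) as (ab & Ha & Hb & _).
  assert (Eq : path_q Pa \oc K' = ab \oc (cyl_incl Cy \oc cyl_in1 Cy)).
  { destruct (path_prod_prod Pa (a \oc cyl_incl Cy \oc cyl_in1 Cy)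
      (b \oc cyl_incl Cy \oc cyl_in1 Cy)) as (u & _ & _ & Hu).
    rewrite (Hu (path_q Pa \oc K')), (Hu (ab \oc (cyl_incl Cy \oc cyl_in1 Cy))); auto.
    - rewrite comp_assoc, Ha, comp_assoc; auto.
    - rewrite comp_assoc, Hb, comp_assoc; auto.
    - rewrite comp_assoc; auto.
    - rewrite comp_assoc; auto. }
  destruct (proj2 (cyl_first_acyclic Cy) _ _ (path_q Pa) PY_fibrant prod_fibrant
    (path_q_fib Pa) K' ab Eq) as (L & HL1 & HL2).
  exists (L \oc (cyl_incl Cy \oc cyl_in2 Cy)).
  repeat rewrite <- comp_assoc.
  rewrite (comp_assoc _ L (path_q Pa)), HL2, !comp_assoc, Ha, Hb. auto.
Qed.


Lemma lemB (c : Hom (cyl_I Cy) Y) (u v : Hom X (path_P Pa)) :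
  path_pr1 Pa \oc path_q Pa \oc u = c \oc cyl_incl Cy \oc cyl_in1 Cy ->
  path_pr1 Pa \oc path_q Pa \oc v = c \oc cyl_incl Cy \oc cyl_in2 Cy ->
  exists H : Hom (cyl_I Cy) Y,
  H \oc cyl_incl Cy \oc cyl_in1 Cy = path_pr2 Pa \oc path_q Pa \oc u /\
  H \oc cyl_incl Cy \oc cyl_in2 Cy = path_pr2 Pa \oc path_q Pa \oc v.
Proof.
  intros E1 E2.
  destruct (cyl_sum_coprod Cy u v) as (uv & Hu & Hv & _).
  assert (Eq : (path_pr1 Pa \oc path_q Pa) \oc uv = c \oc cyl_incl Cy).
  { destruct (cyl_sum_coprod Cy (path_pr1 Pa \oc path_q Pa \oc u)
      (path_pr1 Pa \oc path_q Pa \oc v)) as (w & _ & _ & Hw).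
    rewrite (Hw ((path_pr1 Pa \oc path_q Pa) \oc uv)), (Hw (c \oc cyl_incl Cy)); auto.
    - rewrite <- comp_assoc, Hu; auto.
    - rewrite <- comp_assoc, Hv; auto. }
  destruct (proj2 (path_first_acyclic Pa) _ _ (cyl_incl Cy) sum_cofibrant IX_cofibrant
    (cyl_incl_cof Cy) uv c Eq) as (L & HL1 & HL2).
  exists (path_pr2 Pa \oc path_q Pa \oc L).
  repeat rewrite <- comp_assoc.
  rewrite !(comp_assoc _ (cyl_incl Cy) L), HL1, Hu, Hv. auto.
Qed.

Lemma cyl_path (f g : Hom X Y) : homotopic_cyl Cy f g -> homotopic_path Pa f g.
Proof.
  intros [H [H1 H2]].
  destruct (cyl_refl f) as (f0 & F1 & F2).
  destruct (path_refl f) as (s & S1 & S2).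
  destruct (lemA (f0 \oc cyl_p Cy) H s) as (K & K1 & K2).
  - rewrite S1, F1; auto.
  - rewrite S2, H1; auto.
  - exists K. rewrite K1, K2, F2, H2. auto.
Qed.

Lemma cyl_path_sym (f g : Hom X Y) : homotopic_cyl Cy f g -> homotopic_path Pa g f.
Proof.
  intros [H [H1 H2]].
  destruct (cyl_refl f) as (f0 & F1 & F2).
  destruct (path_refl f) as (s & S1 & S2).
  destruct (lemA H (f0 \oc cyl_p Cy) s) as (K & K1 & K2).
  - rewrite S1, H1; auto.
  - rewrite S2, F1; auto.
  - exists K. rewrite K1, K2, F2, H2. auto.
Qed.

Lemma path_cyl (f g : Hom X Y) : homotopic_path Pa f g -> homotopic_cyl Cy f g.
Proof.
  intros [K [K1 K2]].
  destruct (cyl_refl f) as (f0 & F1 & F2).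
  destruct (path_refl f) as (s & S1 & S2).
  destruct (lemB (f0 \oc cyl_p Cy) s K) as (H & H1 & H2).
  - rewrite S1, F1; auto.
  - rewrite K1, F2; auto.
  - exists H. rewrite H1, H2, S2, K2. auto.
Qed.

Lemma cyl_trans (f g h : Hom X Y) :
  homotopic_cyl Cy f g -> homotopic_cyl Cy g h -> homotopic_cyl Cy f h.
Proof.
  intros Hfg Hgh.
  destruct (path_cyl _ _ (cyl_path_sym _ _ Hfg)) as [H' [H1 H2]].
  destruct (cyl_path _ _ Hgh) as [K' [K1 K2]].
  destruct (cyl_refl h) as (h0 & F1 & F2).
  destruct (lemA H' (h0 \oc cyl_p Cy) K') as (K & E1 & E2).
  - rewrite K1, H1; auto.
  - rewrite K2, F1; auto.
  - apply path_cyl. exists K. rewrite E1, E2, H2, F2. auto.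
Qed.

Lemma cyl_equiv : is_equivalence (@homotopic_cyl C Cof Fib X Y Cy).
Proof.
  split; [|split].
  - intro f. destruct (cyl_refl f) as (f0 & F1 & F2). exists (f0 \oc cyl_p Cy); auto.
  - intros f g Hfg. apply path_cyl, cyl_path_sym, Hfg.
  - exact cyl_trans.
Qed.

End Main.

Theorem theorem2p1p17 (C : Category) (Cof : CofibClass C) (Fib : FibClass C)
    (X Y : C) (hX : cofibrant Cof X) (hY : fibrant Fib Y)
    (hcyl : exists Cy : weak_cylinder Cof Fib X, True)
    (hpath : exists Pa : weak_path Cof Fib Y, True) :
  (forall Cy : weak_cylinder Cof Fib X,
      is_equivalence (@homotopic_cyl C Cof Fib X Y Cy)) /\
  (forall Pa : weak_path Cof Fib Y,
      is_equivalence (@homotopic_path C Cof Fib X Y Pa)) /\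
  (forall (Cy : weak_cylinder Cof Fib X) (Pa : weak_path Cof Fib Y) (f g : Hom X Y),
      homotopic_cyl Cy f g <-> homotopic_path Pa f g) /\
  (forall (Cy Cy' : weak_cylinder Cof Fib X) (f g : Hom X Y),
      homotopic_cyl Cy f g <-> homotopic_cyl Cy' f g) /\
  (forall (Pa Pa' : weak_path Cof Fib Y) (f g : Hom X Y),
      homotopic_path Pa f g <-> homotopic_path Pa' f g).
Proof.
  destruct hcyl as [Cy0 _]. destruct hpath as [Pa0 _].
  assert (key : forall (Cy : weak_cylinder Cof Fib X) (Pa : weak_path Cof Fib Y) (f g : Hom X Y),
      homotopic_cyl Cy f g <-> homotopic_path Pa f g).
  { intros Cy Pa f g. split; [apply cyl_path | apply path_cyl]; assumption. }
  split; [|split; [|split; [|split]]].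
  - intro Cy. exact (@cyl_equiv _ _ _ _ _ hX hY Cy Pa0).
  - intro Pa. destruct (@cyl_equiv _ _ _ _ _ hX hY Cy0 Pa) as (R & S & T). split; [|split].
    + intro f. apply (key Cy0 Pa). apply R.
    + intros f g H. apply (key Cy0 Pa). apply S. apply (key Cy0 Pa). exact H.
    + intros f g h H1 H2. apply (key Cy0 Pa). apply (T f g h); apply (key Cy0 Pa); assumption.
  - exact key.
  - intros Cy Cy' f g. split; intro H.
    + apply (key Cy' Pa0), (key Cy Pa0), H.
    + apply (key Cy Pa0), (key Cy' Pa0), H.
  - intros Pa Pa' f g. split; intro H.
    + apply (key Cy0 Pa'), (key Cy0 Pa), H.
    + apply (key Cy0 Pa), (key Cy0 Pa'), H.
Qed.
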